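(* Let $A$ be a finite multiset of $n$ points in $\mathbb{R}^d$ with mean $\mu$, let $\varepsilon,\delta\in(0,1)$, $b>0$, $k=b\log\delta^{-1}$ and $r=\frac{1}{11}\sqrt{\frac{\varepsilon\,\mathrm{Opt}}{n}}$. Let $\hat\mu_1,\dots,\hat\mu_k\in\mathbb{R}^d$ be points such that at least $\frac{7}{10}b\log\delta^{-1}$ indices $i$ satisfy $\|\hat\mu_i-\mu\|\le r$. Let $m$ be the coordinate-wise median of $\hat\mu_1,\dots,\hat\mu_k$. Then $\|m-\mu\|\le b\log\delta^{-1}\cdot r$.
   Context: $\mu=\frac1n\sum_{p\in A}p$, $\mathrm{Opt}=\sum_{p\in A}\|p-\mu\|^2$. The coordinate-wise median $m$ is the point whose $l$-th coordinate, for each $l\in\{1,\dots,d\}$, is a median of the multiset $\{(\hat\mu_1)_l,\dots,(\hat\mu_k)_l\}$ (chosen among these values). *)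

(* Defs.v *)
From HB Require Import structures.
From mathcomp Require Import all_boot all_order all_algebra.
From mathcomp Require Import all_classical all_reals all_analysis.
Set Implicit Arguments. Unset Strict Implicit. Unset Printing Implicit Defensive.
Import Order.TTheory GRing.Theory Num.Theory.
Local Open Scope ring_scope.

Definition enorm {R : realType} {d : nat} (v : 'rV[R]_d) : R :=
  Num.sqrt (\sum_(l < d) v 0 l ^+ 2).

Definition mean {R : realType} {d n : nat} (A : 'I_n -> 'rV[R]_d) : 'rV[R]_d :=
  (n%:R)^-1 *: \sum_(i < n) A i.

Definition Opt {R : realType} {d n : nat} (A : 'I_n -> 'rV[R]_d) : R :=
  \sum_(i < n) enorm (A i - mean A) ^+ 2.

Definition is_median {R : realType} {k : nat} (x : 'I_k -> R) (v : R) : Prop :=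
  [/\ exists i, x i = v,
      (k <= 2 * #|[set i | (x i <= v)%R]|)%N &
      (k <= 2 * #|[set i | (v <= x i)%R]|)%N].

Definition is_coord_median {R : realType} {d k : nat}
  (muhat : 'I_k -> 'rV[R]_d) (m : 'rV[R]_d) : Prop :=
  forall l : 'I_d, is_median (fun i => muhat i 0 l) (m 0 l).

(* Main.v *)
Require Import Defs.
From HB Require Import structures.
From mathcomp Require Import all_boot all_order all_algebra.
From mathcomp Require Import all_classical all_reals all_analysis.
From mathcomp Require Import lra ring.
Import Order.TTheory GRing.Theory Num.Theory.
Local Open Scope ring_scope.

Lemma inter_nonempty (R : realType) (k : nat) (U G : {set 'I_k}) :
  (0 < k)%N -> (k <= 2 * #|U|)%N -> 7 / 10 * (k%:R : R) <= #|G|%:R ->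
  exists i, (i \in U) && (i \in G).
Proof.
move=> k0 hU hG.
have [/set0Pn [i]|/negPn/eqP E] := boolP (U :&: G != finset.set0).
  by rewrite inE => ?; exists i.
have hc := cardsU U G; rewrite E cards0 subn0 in hc.
have hk : (#|U :|: G| <= k)%N by rewrite -[k in (_ <= k)%N]card_ord max_card.
have h1 : (#|U| + #|G| <= k)%N by rewrite -hc.
have h1' : (#|U|%:R + #|G|%:R <= k%:R :> R) by rewrite -natrD ler_nat.
have h2' : (k%:R <= 2 * #|U|%:R :> R) by rewrite -natrM ler_nat.
have h3 : (0 < k%:R :> R) by rewrite ltr0n.
exfalso; lra.
Qed.

Lemma sq_of_enorm (R : realType) (d : nat) (v : 'rV[R]_d) (r : R) :
  enorm v <= r -> \sum_(l < d) v 0 l ^+ 2 <= r ^+ 2.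
Proof.
move=> h.
have s0 : 0 <= \sum_(l < d) v 0 l ^+ 2 by apply: sumr_ge0 => l _; exact: sqr_ge0.
rewrite -(sqr_sqrtr s0).
have e0 : 0 <= enorm v by exact: sqrtr_ge0.
rewrite /enorm in h e0.
set t := Num.sqrt _ in h e0 *.
nra.
Qed.

Lemma fin2 (F : realFieldType) (r g kk : F) :
  g <= kk -> 1 <= kk -> r ^+ 2 * g <= (kk * r) ^+ 2.
Proof.
move=> h3 h4.
have r2 : 0 <= r ^+ 2 by exact: sqr_ge0.
have a : 0 <= r ^+ 2 * (kk - g) by apply: mulr_ge0 => //; rewrite subr_ge0.
have b : 0 <= r ^+ 2 * kk * (kk - 1).
  apply: mulr_ge0; [apply: mulr_ge0 => //; exact: le_trans h4 | by rewrite subr_ge0].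
have -> : (kk * r) ^+ 2 = r ^+ 2 * g + r ^+ 2 * (kk - g) + r ^+ 2 * kk * (kk - 1).
  by rewrite exprMn; ring.
lra.
Qed.

Theorem lemma3p5 (R : realType) (d n : nat) (A : 'I_n -> 'rV[R]_d)
  (eps delta b : R) (k : nat) (muhat : 'I_k -> 'rV[R]_d) (m : 'rV[R]_d) :
  (0 < n)%N ->
  0 < eps < 1 -> 0 < delta < 1 -> 0 < b ->
  k%:R = b * ln (delta^-1) ->
  let r := 11^-1 * Num.sqrt (eps * Opt A / n%:R) in
  7 / 10 * b * ln (delta^-1) <=
    (#|[set i | enorm (muhat i - mean A) <= r]|)%:R ->
  is_coord_median muhat m ->
  enorm (m - mean A) <= b * ln (delta^-1) * r.
Proof.
move=> n0 /andP[e0 e1] /andP[d0 d1] b0 hk r hG hm.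
have lnpos : 0 < ln (delta^-1).
  apply: ln_gt0; rewrite invf_gt1 //.
have kpos : (0 < k)%N.
  by rewrite -(ltr0n R) hk mulr_gt0.
rewrite -hk.
set mu := mean A.
set G := [set i | enorm (muhat i - mu) <= r].
have r0 : 0 <= r by rewrite /r mulr_ge0 ?invr_ge0 ?sqrtr_ge0.
clearbody r.
have hG' : 7 / 10 * (k%:R : R) <= #|G|%:R by rewrite hk mulrA.
have key : forall l : 'I_d, exists2 i, i \in G &
    (m 0 l - mu 0 l) ^+ 2 <= (muhat i 0 l - mu 0 l) ^+ 2.
  move=> l; have [_ hle hge] := hm l.
  have [hml|hml] := lerP (mu 0 l) (m 0 l).
    have [i /andP[]] := @inter_nonempty R _ _ _ kpos hge hG'.
    rewrite inE => hi iG; exists i => //.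
    have : 0 <= m 0 l - mu 0 l by rewrite subr_ge0.
    have : m 0 l - mu 0 l <= muhat i 0 l - mu 0 l by rewrite lerD2r.
    move=> h1 h2; nra.
  have [i /andP[]] := @inter_nonempty R _ _ _ kpos hle hG'.
  rewrite inE => hi iG; exists i => //.
  have : m 0 l - mu 0 l <= 0 by rewrite subr_le0 ltW.
  have : muhat i 0 l - mu 0 l <= m 0 l - mu 0 l by rewrite lerD2r.
  move=> h1 h2; nra.
have S1 : \sum_(l < d) (m - mu) 0 l ^+ 2 <=
          \sum_(l < d) \sum_(i in G) (muhat i - mu) 0 l ^+ 2.
  apply: ler_sum => l _; rewrite mxE.
  have [i iG hi] := key l.
  rewrite (bigD1 i) //= mxE.
  apply: (le_trans hi). have -> : (muhat i - mu) 0 l = muhat i 0 l - mu 0 l by rewrite !mxE. rewrite lerDl.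
  by apply: sumr_ge0 => j _; exact: sqr_ge0.
rewrite exchange_big /= in S1.
have S2 : \sum_(i in G) \sum_(l < d) (muhat i - mu) 0 l ^+ 2 <= \sum_(i in G) r ^+ 2.
  apply: ler_sum => i; rewrite inE => hi; exact: sq_of_enorm.
rewrite sumr_const in S2.
have S3 : (#|G|%:R : R) <= k%:R.
  by rewrite ler_nat -[X in (_ <= X)%N]card_ord max_card.
have k1 : (1 : R) <= k%:R by rewrite ler1n.
have kr0 : 0 <= k%:R * r by rewrite mulr_ge0.
rewrite /enorm -[_ * r]ger0_norm // -sqrtr_sqr ler_sqrt ?sqr_ge0 //.
rewrite -mulr_natr in S2.
set T := \sum_(l < d) _ in S1 *.
set U := \sum_(i in G) _ in S1 S2.
have r2 : 0 <= r ^+ 2 by exact: sqr_ge0.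
set kk := (k%:R : R) in S3 k1 kr0 *.
set g := (#|G|%:R : R) in S2 S3.

apply: (le_trans S1); apply: (le_trans S2); apply: fin2 S3 k1.
Qed.
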